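(* For every integer $n\ge 2$, the origami flip graph ${\rm OFG}(M_{2,n})$ has exactly $8(n+1)3^{n-3}$ edges.
   Context: The $2\times n$ Miura-ori $M_{2,n}$ ($n\ge 1$) has faces $\alpha_{i,j}$ ($i\in\{1,2\}$ row, $j\in\{1,\dots,n\}$ column), interior vertices $x_1,\dots,x_{n-1}$, and creases $e_0$ and $e_{3k-1},e_{3k},e_{3k+1}$ for $k=1,\dots,n-1$. At $x_k$ the incident creases are left $e_{3k-3}$, top $e_{3k-1}$, right $e_{3k}$, bottom $e_{3k+1}$ (the two sector angles adjacent to the left crease are obtuse, the others acute). Face $\alpha_{1,j}$ is bordered by those of $e_{3j-4}$ (iff $j\ge2$), $e_{3j-3}$, $e_{3j-1}$ (iff $j\le n-1$); face $\alpha_{2,j}$ by those of $e_{3j-2}$ (iff $j\ge2$), $e_{3j-3}$, $e_{3j+1}$ (iff $j\le n-1$). An MV assignment is a map $\mu$ from the creases to $\{1,-1\}$ (mountain/valley); it is locally valid if for each $k$ exactly one of $\mu(e_{3k-1}),\mu(e_{3k}),\mu(e_{3k+1})$ differs from $\mu(e_{3k-3})$. The face flip $\mu_\alpha$ negates $\mu$ exactly on the creases bordering face $\alpha$; $\alpha$ is flippable under $\mu$ if $\mu$ and $\mu_\alpha$ are both locally valid. ${\rm OFG}(M_{2,n})$ has the locally valid MV assignments as vertices, with $\mu\sim\mu_\alpha$ for each flippable $\alpha$. *)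

(* Defs.v *)
From mathcomp Require Import all_boot.
Set Implicit Arguments. Unset Strict Implicit. Unset Printing Implicit Defensive.

(* Crease e_c of M_{2,n}: c = 0, or c in {3k-1,3k,3k+1} for 1 <= k <= n-1,
   i.e. c = 0 or 2 <= c <= 3n-2. *)
Definition is_crease (n c : nat) : bool := (c == 0) || (2 <= c <= 3 * n - 2).

Definition crease (n : nat) := {i : 'I_(3 * n - 1) | is_crease n i}.

(* MV assignments: true = mountain (1), false = valley (-1). *)
Definition MV (n : nat) := {ffun crease n -> bool}.

(* value of mu on the crease with index c (false if c is not a crease) *)
Definition mv_at n (mu : MV n) (c : nat) : bool :=
  [exists e : crease n, (val (val e) == c) && mu e].

Definition locally_valid n (mu : MV n) : bool :=
  [forall k : 'I_n, (0 < k) ==>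
     (count (fun c => mv_at mu c != mv_at mu (3 * k - 3))
            [:: 3 * k - 1; 3 * k; 3 * k + 1] == 1)].

(* faces alpha_{i,j}: (false, j') is alpha_{1,j'+1}, (true, j') is alpha_{2,j'+1} *)
Definition face (n : nat) := (bool * 'I_n)%type.

Definition borders n (a : face n) (c : nat) : bool :=
  let j := (val a.2).+1 in
  if ~~ a.1 then
    [|| (2 <= j) && (c == 3 * j - 4), c == 3 * j - 3 | (j <= n - 1) && (c == 3 * j - 1)]
  else
    [|| (2 <= j) && (c == 3 * j - 2), c == 3 * j - 3 | (j <= n - 1) && (c == 3 * j + 1)].

Definition flip n (mu : MV n) (a : face n) : MV n :=
  [ffun e => mu e (+) borders a (val (val e))].

Definition flippable n (mu : MV n) (a : face n) : bool :=
  locally_valid mu && locally_valid (flip mu a).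

Definition ofg_adj n (mu nu : MV n) : bool :=
  locally_valid mu && [exists a : face n, flippable mu a && (nu == flip mu a)].

Definition ofg_edges (n : nat) : {set {set MV n}} :=
  [set E : {set MV n} | [exists mu : MV n, exists nu : MV n,
      [&& E == [set mu; nu], mu != nu & ofg_adj mu nu]]].

(* Main.v *)
Require Import Defs.
From mathcomp Require Import all_boot zify.
Set Implicit Arguments. Unset Strict Implicit. Unset Printing Implicit Defensive.

Definition creaseb n p := (p < 3 * n - 1) && is_crease n p.

Lemma mv_at_val n (mu : MV n) (e : crease n) : mv_at mu (val (val e)) = mu e.
Proof.
apply/existsP/idP => [[e' /andP[/eqP h m]]|m]; last by exists e; rewrite eqxx.
suff -> : e = e' by [].
by apply/val_inj/val_inj.
Qed.

Lemma mv_at_ffun n (h : nat -> bool) p :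
  mv_at ([ffun e : crease n => h (val (val e))] : MV n) p = creaseb n p && h p.
Proof.
apply/existsP/andP => [[e /andP[/eqP <-]]|[/andP[hp hc] hh]].
  rewrite ffunE => ->; split=> //; case: e => [[i hi] hc] /=.
  by rewrite /creaseb hi hc.
by exists (Sub (Ordinal hp) hc); rewrite ffunE /= eqxx hh.
Qed.

Lemma flipE n (mu : MV n) a :
  flip mu a = [ffun e => (fun p => mv_at mu p (+) borders a p) (val (val e))].
Proof. by apply/ffunP=> e; rewrite !ffunE mv_at_val. Qed.


Lemma ex_crease n p : creaseb n p -> exists e : crease n, val (val e) = p.
Proof. by case/andP=> hp hc; exists (Sub (Ordinal hp) hc). Qed.

Definition vc (f : nat -> bool) i :=
  count (fun c => f c != f (3 * i)) [:: 3 * i + 2; 3 * i + 3; 3 * i + 4] == 1.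

Lemma validE n (mu : MV n) :
  locally_valid mu = [forall i : 'I_n.-1, vc (mv_at mu) i].
Proof.
apply/forallP/forallP => H i.
  have hi : i.+1 < n by case: i => /= i; lia.
  move: (H (Ordinal hi)) => /=.
  rewrite /vc (_ : 3 * i.+1 - 3 = 3 * i); last by lia.
  rewrite (_ : 3 * i.+1 - 1 = 3 * i + 2); last by lia.
  rewrite (_ : 3 * i.+1 = 3 * i + 3); last by lia.
  by rewrite (_ : 3 * i + 3 + 1 = 3 * i + 4); last by lia.
apply/implyP => i0.
have hi : i.-1 < n.-1 by case: i i0 => /= i; lia.
move: (H (Ordinal hi)); rewrite /vc /=.
rewrite (_ : 3 * i - 3 = 3 * i.-1); last by lia.
rewrite (_ : 3 * i - 1 = 3 * i.-1 + 2); last by lia.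
rewrite (_ : 3 * i + 1 = 3 * i.-1 + 4); last by lia.
by rewrite (_ : 3 * i = 3 * i.-1 + 3) //; lia.
Qed.

Lemma creaseb_v n i t : i < n.-1 -> t <= 4 -> t != 1 -> creaseb n (3 * i + t).
Proof. rewrite /creaseb /is_crease; lia. Qed.

Lemma bord0 n r (jj : 'I_n) i : i < n.-1 -> borders (r, jj) (3 * i) = (i == jj).
Proof. by case: r; rewrite /borders /= => h; apply/idP/idP; lia. Qed.
Lemma bord2 n r (jj : 'I_n) i : i < n.-1 ->
  borders (r, jj) (3 * i + 2) = ~~ r && ((i.+1 == jj) || (i == jj)).
Proof. by case: r; rewrite /borders /= => h; apply/idP/idP; lia. Qed.
Lemma bord3 n r (jj : 'I_n) i : i < n.-1 -> borders (r, jj) (3 * i + 3) = (i.+1 == jj).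
Proof. by case: r; rewrite /borders /= => h; apply/idP/idP; lia. Qed.
Lemma bord4 n r (jj : 'I_n) i : i < n.-1 ->
  borders (r, jj) (3 * i + 4) = r && ((i.+1 == jj) || (i == jj)).
Proof. by case: r; rewrite /borders /= => h; apply/idP/idP; lia. Qed.

Lemma mv_at_flip n (mu : MV n) a p :
  mv_at (flip mu a) p = creaseb n p && (mv_at mu p (+) borders a p).
Proof.
apply/existsP/andP => [[e /andP[/eqP <-]]|[hc hh]].
  rewrite ffunE -mv_at_val => ->; split=> //; case: e => [[i hi] hc] /=.
  by rewrite /creaseb hi hc.
case/andP: hc => hp hc; exists (Sub (Ordinal hp) hc).
by rewrite ffunE /= eqxx -(mv_at_val mu (Sub (Ordinal hp) hc)).
Qed.

Definition code n := (bool * {ffun 'I_n.-1 -> 'I_3})%type.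
Definition cc n (c : {ffun 'I_n.-1 -> 'I_3}) (k : nat) : nat :=
  if insub k is Some i then nat_of_ord (c i) else 0.
Fixpoint sv n (x : code n) k :=
  if k is k'.+1 then sv x k' (+) (cc x.2 k' == 1) else x.1.
Definition g n (x : code n) p :=
  let k := p %/ 3 in let r := p %% 3 in
  if r == 0 then sv x k else if r == 2 then sv x k (+) (cc x.2 k == 0)
  else sv x k.-1 (+) (cc x.2 k.-1 == 2).
Definition dec n (x : code n) : MV n := [ffun e => g x (val (val e))].

Lemma ccE n (c : {ffun 'I_n.-1 -> 'I_3}) (i : 'I_n.-1) : cc c i = c i.
Proof. by rewrite /cc valK. Qed.

Lemma g0 n (x : code n) i : g x (3 * i) = sv x i.
Proof. rewrite /g; have -> : (3 * i) %/ 3 = i by lia.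
by have -> : (3 * i) %% 3 = 0 by lia. Qed.
Lemma g2 n (x : code n) i : g x (3 * i + 2) = sv x i (+) (cc x.2 i == 0).
Proof. rewrite /g; have -> : (3 * i + 2) %/ 3 = i by lia.
by have -> : (3 * i + 2) %% 3 = 2 by lia. Qed.
Lemma g3 n (x : code n) i : g x (3 * i + 3) = sv x i (+) (cc x.2 i == 1).
Proof. rewrite /g; have -> : (3 * i + 3) %/ 3 = i.+1 by lia.
by have -> : (3 * i + 3) %% 3 = 0 by lia. Qed.
Lemma g4 n (x : code n) i : g x (3 * i + 4) = sv x i (+) (cc x.2 i == 2).
Proof. rewrite /g; have -> : (3 * i + 4) %/ 3 = i.+1 by lia.
by have -> : (3 * i + 4) %% 3 = 1 by lia. Qed.

Lemma mv_dec n (x : code n) p : mv_at (dec x) p = creaseb n p && g x p.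
Proof.
apply/existsP/andP => [[e /andP[/eqP <-]]|[hc hh]].
  rewrite ffunE => ->; split=> //; case: e => [[i hi] hc] /=.
  by rewrite /creaseb hi hc.
case/andP: hc => hp hc; exists (Sub (Ordinal hp) hc).
by rewrite ffunE /= eqxx.
Qed.

Lemma vc_dec n (x : code n) (i : 'I_n.-1) :
  vc (mv_at (dec x)) i = vc (g x) i.
Proof.
have hi := ltn_ord i.
have c0 : creaseb n (3 * i) by rewrite /creaseb /is_crease; lia.
have c2 : creaseb n (3 * i + 2) by rewrite /creaseb /is_crease; lia.
have c3 : creaseb n (3 * i + 3) by rewrite /creaseb /is_crease; lia.
have c4 : creaseb n (3 * i + 4) by rewrite /creaseb /is_crease; lia.
by rewrite /vc /= !mv_dec c0 c2 c3 c4.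
Qed.

Lemma dec_valid n (x : code n) : locally_valid (dec x).
Proof.
rewrite validE; apply/forallP => i; rewrite vc_dec /vc /=.
rewrite g0 g2 g3 g4 ccE.
by case: (x.2 i) => [[|[|[|t]]] ht] //=; case: (sv x i).
Qed.

Definition Fp n (r : bool) (jj : nat) (i : 'I_n.-1) : pred 'I_3 :=
  fun t => (((nat_of_ord i).+1 == jj) ==> (val t != (if r then 0 else 2))) &&
           ((nat_of_ord i == jj) ==> (val t != (if r then 2 else 0))).

Lemma flip_dec n (x : code n) r (jj : 'I_n) :
  locally_valid (flip (dec x) (r, jj)) = [forall i, Fp r jj i (x.2 i)].
Proof.
rewrite validE; apply: eq_forallb => i.
have hi := ltn_ord i.
have c0 : creaseb n (3 * i) by rewrite /creaseb /is_crease; lia.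
have c2 : creaseb n (3 * i + 2) by rewrite /creaseb /is_crease; lia.
have c3 : creaseb n (3 * i + 3) by rewrite /creaseb /is_crease; lia.
have c4 : creaseb n (3 * i + 4) by rewrite /creaseb /is_crease; lia.
rewrite /vc /= !mv_at_flip !mv_dec c0 c2 c3 c4 /= g0 g2 g3 g4.
rewrite bord0 // bord2 // bord3 // bord4 // ccE /Fp.
have : ~~ (((nat_of_ord i).+1 == jj) && (nat_of_ord i == jj)) by apply/negP; lia.
case: ((nat_of_ord i).+1 == jj); case: (nat_of_ord i == nat_of_ord jj); case: (x.2 i) => [[|[|[|t]]] ht] //;
  by case: r; case: (sv x i).
Qed.

Definition cd (a b c : bool) : nat := if b != a then 0 else if c != a then 1 else 2.
Definition enc n (mu : MV n) : code n :=
  (mv_at mu 0, [ffun i : 'I_n.-1 =>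
     (inord (cd (mv_at mu (3 * i)) (mv_at mu (3 * i + 2)) (mv_at mu (3 * i + 3))) : 'I_3)]).

Lemma cd_le a b c : cd a b c <= 2.
Proof. by rewrite /cd; case: (b != a); case: (c != a). Qed.

Lemma enc2 n (mu : MV n) i :
  nat_of_ord ((enc mu).2 i) = cd (mv_at mu (3 * i)) (mv_at mu (3 * i + 2)) (mv_at mu (3 * i + 3)).
Proof. by rewrite ffunE inordK // ltnS cd_le. Qed.

Lemma enc_dec n (hn : 0 < n) (x : code n) : enc (dec x) = x.
Proof.
case: x => b c; rewrite /enc; congr pair.
  have c0 : creaseb n 0 by rewrite /creaseb /is_crease; lia.
  by rewrite mv_dec c0.
apply/ffunP => i; rewrite ffunE; apply: val_inj; rewrite /= inordK ?ltnS ?cd_le //.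
have hi := ltn_ord i.
have c0 : creaseb n (3 * i) by rewrite /creaseb /is_crease; lia.
have c2 : creaseb n (3 * i + 2) by rewrite /creaseb /is_crease; lia.
have c3 : creaseb n (3 * i + 3) by rewrite /creaseb /is_crease; lia.
rewrite !mv_dec c0 c2 c3 /= g0 g2 g3 ccE /cd /=.
by case: (c i) => [[|[|[|t]]] ht] //=; case: (sv (b, c) i).
Qed.

Lemma vtx n (mu : MV n) (V : locally_valid mu) (i : 'I_n.-1) :
  let f := mv_at mu in let k := cd (f (3 * i)) (f (3 * i + 2)) (f (3 * i + 3)) in
  [/\ f (3 * i + 2) = f (3 * i) (+) (k == 0), f (3 * i + 3) = f (3 * i) (+) (k == 1)
    & f (3 * i + 4) = f (3 * i) (+) (k == 2)].
Proof.
move: V; rewrite validE => /forallP /(_ i); rewrite /vc /= /cd.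
case: (mv_at mu (3 * i)); case: (mv_at mu (3 * i + 2));
  case: (mv_at mu (3 * i + 3)); by case: (mv_at mu (3 * i + 4)).
Qed.

Lemma sv_enc n (mu : MV n) (V : locally_valid mu) k : k < n -> sv (enc mu) k = mv_at mu (3 * k).
Proof.
elim: k => [|k IH] hk /=; first by rewrite muln0.
have hk' : k < n.-1 by lia.
have := ccE (enc mu).2 (Ordinal hk') => /= ->.
rewrite IH; last by lia.
case: (vtx V (Ordinal hk')) => /= _ h3 _.
rewrite ffunE /= inordK ?ltnS ?cd_le //.
have -> : 3 * k.+1 = 3 * k + 3 by lia.
by rewrite [RHS]h3.
Qed.

Lemma dec_enc n (mu : MV n) (V : locally_valid mu) : dec (enc mu) = mu.
Proof.
apply/ffunP => e; rewrite ffunE -mv_at_val.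
have : creaseb n (val (val e)) by case: e => [[p hp] hc] /=; rewrite /creaseb hp hc.
move: (val (val e)) => p hp.
have [q [[-> hq]|[[-> hq]|[-> hq]]]] : exists q, (p = 3 * q /\ q < n) \/
   (p = 3 * q + 2 /\ q < n.-1) \/ (p = 3 * q + 4 /\ q < n.-1).
  exists (if p %% 3 == 1 then (p %/ 3).-1 else p %/ 3).
  move: hp; rewrite /creaseb /is_crease => hp.
  case: ifP hp => [/eqP|/negbT/eqP] h hp; lia.
- by rewrite g0 sv_enc.
- rewrite g2 (sv_enc V); last by lia.
  rewrite (ccE (enc mu).2 (Ordinal hq)) enc2 /=.
  by case: (vtx V (Ordinal hq)) => /= h2 _ _; rewrite [RHS]h2.
- rewrite g4 (sv_enc V); last by lia.
  rewrite (ccE (enc mu).2 (Ordinal hq)) enc2 /=.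
  by case: (vtx V (Ordinal hq)) => /= _ _ h4; rewrite [RHS]h4.
Qed.

Lemma card3 (P : pred 'I_3) : #|P| = P (@Ordinal 3 0 isT) + P (@Ordinal 3 1 isT) + P (@Ordinal 3 2 isT).
Proof.
rewrite -sum1_card big_mkcond /= !big_ord_recr big_ord0 /= add0n.
rewrite (_ : widen_ord _ (widen_ord _ ord_max) = Ordinal (isT : 0 < 3)); last exact: val_inj.
rewrite (_ : widen_ord _ ord_max = Ordinal (isT : 1 < 3)); last exact: val_inj.
rewrite (_ : ord_max = Ordinal (isT : 2 < 3)); last exact: val_inj.
by rewrite !unfold_in; do 3 case: (P _).
Qed.

Lemma card_Fp n r (jj : nat) (i : 'I_n.-1) :
  #|Fp r jj i| = 3 - ((nat_of_ord i).+1 == jj) - (nat_of_ord i == jj).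
Proof.
rewrite card3 /Fp /=.
have : ~~ (((nat_of_ord i).+1 == jj) && (nat_of_ord i == jj)) by apply/negP; lia.
by case: ((nat_of_ord i).+1 == jj); case: (nat_of_ord i == jj); case: r.
Qed.

Lemma card_flip n (hn : 0 < n) r (jj : 'I_n) :
  #|[set mu : MV n | flippable mu (r, jj)]| =
  2 * \prod_(i < n.-1) (3 - ((nat_of_ord i).+1 == jj) - (nat_of_ord i == jj)).
Proof.
have inj : injective (@dec n) := can_inj (enc_dec hn).
have -> : [set mu : MV n | flippable mu (r, jj)] =
    (@dec n) @: [set x : code n | [forall i, @Fp n r jj i (x.2 i)]].
  apply/setP => mu; rewrite inE; apply/idP/imsetP.
  - case/andP => V F; exists (enc mu); last by rewrite dec_enc.
    by rewrite inE -flip_dec dec_enc.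
  - by case=> x; rewrite inE -flip_dec => h ->; rewrite /flippable dec_valid h.
rewrite card_imset //.
have -> : [set x : code n | [forall i, @Fp n r jj i (x.2 i)]] =
    setX [set: bool] [set c : {ffun 'I_n.-1 -> 'I_3} | [forall i, @Fp n r jj i (c i)]].
  by apply/setP => [[b c]]; rewrite !inE.
rewrite cardsX cardsT card_bool; congr (2 * _).
transitivity #|family (fun i => @Fp n r jj i)|.
  by apply: eq_card => c; rewrite inE; apply/forallP/familyP.
rewrite card_family foldrE big_map big_enum /=.
by apply: eq_bigr => i _; rewrite card_Fp.
Qed.

Definition w m jj := if (jj == 0) || (jj == m) then 6 else if jj < m then 4 else 9.

Lemma prodP m (jj : nat) : 0 < m ->
  9 * \prod_(i < m) (3 - ((nat_of_ord i).+1 == jj) - (nat_of_ord i == jj)) = 3 ^ m * w m jj.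
Proof.
elim: m => [//|m IH] _.
case: (posnP m) => [->|m0].
  by clear IH; rewrite big_ord1 /w; case: jj => [|[|jj]].
rewrite big_ord_recr /= mulnA IH // expnS /w.
case: (@eqP _ m.+1 jj) => ?; case: (@eqP _ m jj) => ?; case: (@eqP _ jj 0) => ?;
  case: (@eqP _ jj m) => ?; case: (@eqP _ jj m.+1) => ?; case: (ltnP jj m) => ?;
  case: (ltnP jj m.+1) => ?; rewrite /=; lia.
Qed.

Lemma sumw m : 0 < m -> \sum_(jj < m.+1) w m jj = 4 * m + 8.
Proof.
case: m => [//|m] _.
rewrite big_ord_recr big_ord_recl /=.
rewrite (eq_bigr (fun _ => 4)); last first.
  move=> i _; rewrite /w /= /bump /=.
  have hi := ltn_ord i.
  have -> : (1 + i == m.+1) = false by apply/negbTE/eqP; lia.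
  by have -> : 1 + i < m.+1 by lia.
rewrite sum_nat_const card_ord /w /= eqxx /=; lia.
Qed.

Lemma flipK n (mu : MV n) a : flip (flip mu a) a = mu.
Proof. by apply/ffunP => e; rewrite !ffunE addbK. Qed.

Lemma bord_self n (a : face n) : borders a (3 * a.2).
Proof. case: a => [[] jj]; rewrite /borders /=; lia. Qed.

Lemma crease_self n (a : face n) : creaseb n (3 * a.2).
Proof. case: a => [r [jj hj]]; rewrite /creaseb /is_crease /=; lia. Qed.

Lemma flip_neq n (mu : MV n) a : flip mu a != mu.
Proof.
apply/eqP => /ffunP H; have [e he] := ex_crease (crease_self a).
by move: (H e); rewrite ffunE he bord_self; case: (mu e).
Qed.

Lemma flip_inj n (hn : 1 < n) (mu : MV n) a b : flip mu a = flip mu b -> a = b.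
Proof.
move=> /ffunP H.
have Hb : forall p, creaseb n p -> borders a p = borders b p.
  move=> p /ex_crease [e <-]; move: (H e); rewrite !ffunE.
  by move=> /(congr1 (addb (mu e))); rewrite !addKb.
clear H; case: a b Hb => [r jj] [r' jj'] Hb.
have ejj : jj = jj'.
  apply: val_inj; move: (Hb _ (crease_self (r, jj))).
  rewrite (bord_self (r, jj)) /= => /esym.
  by case: r' {Hb}; rewrite /borders /= => h; lia.
subst jj'; congr pair.
set p := if nat_of_ord jj == 0 then 2 else 3 * jj - 1.
have hj := ltn_ord jj.
have cp : creaseb n p.
  by rewrite /p /creaseb /is_crease; case: (@eqP _ (nat_of_ord jj) 0) => h; lia.
have hf : borders (false, jj) p.
  by rewrite /p /borders /=; case: (@eqP _ (nat_of_ord jj) 0) => h; lia.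
have ht : borders (true, jj) p = false.
  by apply/negbTE/negP; rewrite /p /borders /=; case: (@eqP _ (nat_of_ord jj) 0) => h; lia.
by case: r r' Hb => [] [] // H; move: (H p cp); rewrite hf ht.
Qed.

Definition pairs n := [set p : MV n * face n | flippable p.1 p.2].

Lemma card_pairs_sum n :
  #|pairs n| = \sum_(a : face n) #|[set mu : MV n | flippable mu a]|.
Proof.
rewrite /pairs -sum1dep_card.
transitivity (\sum_(mu : MV n) \sum_(a : face n) (flippable mu a : nat)).
  rewrite pair_big big_mkcond; apply: eq_big => // p _; by case: (flippable p.1 p.2).
rewrite exchange_big; apply: eq_big => // a _.
rewrite -sum1dep_card [RHS]big_mkcond; apply: eq_big => // mu _; by case: (flippable mu a).
Qed.

Lemma card_pairs_edges n (hn : 1 < n) : #|pairs n| = 2 * #|ofg_edges n|.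
Proof.
pose phi (p : MV n * face n) := [set p.1; flip p.1 p.2].
rewrite -sum1_card (partition_big phi (fun E => E \in ofg_edges n)); last first.
  move=> [mu a]; rewrite inE /= => F; rewrite inE.
  apply/existsP; exists mu; apply/existsP; exists (flip mu a).
  rewrite eqxx /= eq_sym flip_neq /ofg_adj /=.
  case/andP: (F) => -> _ /=; apply/existsP; exists a; by rewrite F eqxx.
transitivity (\sum_(E in ofg_edges n) 2); last by rewrite sum_nat_const mulnC.
apply: eq_bigr => E; rewrite inE => /existsP [mu /existsP [nu /and3P [/eqP -> mn adj]]].
case/andP: adj => V /existsP [a /andP [F /eqP En]].
rewrite sum1dep_card.
rewrite (_ : [set x | _] = [set (mu, a); (nu, a)]).
  by rewrite cards2 xpair_eqE (negbTE mn).
subst nu; apply/setP => [[m b]]; rewrite !inE /= !xpair_eqE /phi /=.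
apply/idP/idP.
- case/andP => Fb /eqP EE.
  have m_in : m \in [set mu; flip mu a] by rewrite -EE set21.
  have f_in : flip m b \in [set mu; flip mu a] by rewrite -EE set22.
  rewrite !inE in m_in f_in.
  case/orP: m_in => /eqP em; subst m.
  + case/orP: f_in => /eqP h; first by move: (flip_neq mu b); rewrite h eqxx.
    by rewrite eqxx (flip_inj hn h) eqxx.
  + case/orP: f_in => /eqP h.
      move: h; rewrite -{2}(flipK mu a) => /(flip_inj hn) ->.
      by rewrite !eqxx orbT.
    by move: (flip_neq (flip mu a) b); rewrite h eqxx.
- case/orP => /andP [/eqP -> /eqP ->].
  + by rewrite F eqxx.
  + have F' : flippable (flip mu a) a by move: F; rewrite /flippable flipK andbC.
    rewrite F' /= flipK.
    by apply/eqP; apply: setUC.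
Qed.

Theorem theorem3p2 (n : nat) (hn : 2 <= n) :
  3 * #|ofg_edges n| = 8 * (n + 1) * 3 ^ (n - 2).
Proof.
have h2 := card_pairs_edges hn.
rewrite card_pairs_sum in h2.
have hn0 : 0 < n by lia.
have hs : \sum_(a : face n) #|[set mu : MV n | flippable mu a]| =
    4 * \sum_(jj < n) \prod_(i < n.-1) (3 - ((nat_of_ord i).+1 == jj) - (nat_of_ord i == jj)).
  transitivity (\sum_(p : bool * 'I_n) #|[set mu : MV n | flippable mu (p.1, p.2)]|).
    by apply: eq_bigr => [[r jj]] _.
  rewrite -(pair_big xpredT xpredT (fun r jj => #|[set mu : MV n | flippable mu (r, jj)]|)) /=.
  rewrite big_bool /=.
  rewrite !(eq_bigr _ (fun jj _ => card_flip hn0 _ jj)) -!big_distrr /=.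
  lia.
case: n hn h2 hs hn0 => [//|m] hm h2 hs _.
have hP : 9 * \sum_(jj < m.+1) \prod_(i < m) (3 - ((nat_of_ord i).+1 == jj) - (nat_of_ord i == jj))
    = 3 ^ m * (4 * m + 8).
  have hm' : 0 < m by lia.
  rewrite big_distrr /=.
  under eq_bigr => jj _ do rewrite (prodP _ hm').
  by rewrite -big_distrr sumw.
move: hP h2 hs => /=.
have -> : m.+1 - 2 = m.-1 by lia.
have -> : 3 ^ m = 3 * 3 ^ m.-1 by rewrite -expnS; congr (3 ^ _); lia.
nia.
Qed.
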